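(* $\mathbf{CL7}$ proves (derives) every binary tautological $\to$-sequent.
   Context: $\to$-formulas are built from propositional atoms with binary $\to$; a $\to$-sequent is $\Gamma\Rightarrow F$ with $\Gamma$ a finite multiset of $\to$-formulas and $F$ a $\to$-formula. A sequent $E_1,\dots,E_n\Rightarrow F$ is tautological (resp. binary) if the classical formula $E_1\wedge\dots\wedge E_n\to F$ is a classical tautology (resp. has no atom occurring more than twice). $\mathbf{CL7}$ has axioms all sequents $\Gamma,F\Rightarrow F$ and exactly two rules: Right $\to$: from $\Gamma,E\Rightarrow F$ infer $\Gamma\Rightarrow E\to F$; Left $\to$: from $\Gamma,F\Rightarrow G$ and $\Delta\Rightarrow E$ infer $\Gamma,\Delta,E\to F\Rightarrow G$ (no contraction). *)

(* Defs.v *)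
From Stdlib Require Import List Permutation Arith Bool.
Import ListNotations.

Inductive form : Type :=
| Atom : nat -> form
| Imp : form -> form -> form.

(* Derivability in CL7 of the sequent  G => F, where the list G is read
   as a multiset (all rules are closed under permutation of antecedents). *)
Inductive CL7 : list form -> form -> Prop :=
| CL7_ax : forall G G' F,
    Permutation G' (F :: G) -> CL7 G' F
| CL7_R : forall G E F,
    CL7 (E :: G) F -> CL7 G (Imp E F)
| CL7_L : forall G D E F H G',
    CL7 (F :: G) H -> CL7 D E ->
    Permutation G' (Imp E F :: G ++ D) -> CL7 G' H.

Fixpoint eval (v : nat -> bool) (f : form) : bool :=
  match f with
  | Atom n => v n
  | Imp a b => implb (eval v a) (eval v b)
  end.

Definition tautological (G : list form) (F : form) : Prop :=
  forall v : nat -> bool,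
    implb (forallb (eval v) G) (eval v F) = true.

Fixpoint occ (a : nat) (f : form) : nat :=
  match f with
  | Atom n => if Nat.eqb n a then 1 else 0
  | Imp x y => occ a x + occ a y
  end.

Definition binary (G : list form) (F : form) : Prop :=
  forall a : nat, fold_right plus 0 (map (occ a) G) + occ a F <= 2.

(* Main.v *)
Require Import Defs.
From Stdlib Require Import List Permutation Arith Bool.
From Stdlib Require Import Lia Wf_nat.
Import ListNotations.

Lemma CL7_perm : forall G F, CL7 G F -> forall G2, Permutation G G2 -> CL7 G2 F.
Proof.
  induction 1 as [G G' F Hp | G E F Hd IH | G D E F H G' Hd1 IH1 Hd2 IH2 Hp];
    intros G2 HP.
  - apply (CL7_ax G). eapply Permutation_trans; [apply Permutation_sym; exact HP| exact Hp].
  - apply CL7_R. apply IH. apply perm_skip; auto.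
  - eapply CL7_L; [exact Hd1| exact Hd2| ].
    eapply Permutation_trans; [apply Permutation_sym; exact HP| exact Hp].
Qed.

Lemma CL7_weak : forall G F, CL7 G F -> forall X, CL7 (X::G) F.
Proof.
  induction 1 as [G G' F Hp | G E F Hd IH | G D E F H G' Hd1 IH1 Hd2 IH2 Hp];
    intros X.
  - apply (CL7_ax (X::G)).
    eapply Permutation_trans; [apply perm_skip; exact Hp| apply perm_swap].
  - apply CL7_R. apply CL7_perm with (X::E::G); [apply IH| apply perm_swap].
  - apply CL7_L with (G:=X::G) (D:=D) (E:=E) (F:=F).
    + apply CL7_perm with (X::F::G); [apply IH1| apply perm_swap].
    + exact Hd2.
    + simpl. eapply Permutation_trans; [apply perm_skip; exact Hp| apply perm_swap].
Qed.

Lemma CL7_weak_app : forall B G F, CL7 G F -> CL7 (B ++ G) F.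
Proof. induction B; simpl; auto using CL7_weak. Qed.

Fixpoint head (f : form) : nat := match f with Atom n => n | Imp _ g => head g end.
Fixpoint imps (f : form) : nat := match f with Atom _ => 0 | Imp a b => S (imps a + imps b) end.

Definition upd (v : nat -> bool) a b := fun n => if Nat.eqb n a then b else v n.

Lemma upd_eq : forall v a b, upd v a b a = b.
Proof. intros; unfold upd; rewrite Nat.eqb_refl; auto. Qed.

Lemma eval_upd : forall f v a b, occ a f = 0 -> eval (upd v a b) f = eval v f.
Proof.
  induction f; simpl; intros v a b H.
  - unfold upd. destruct (Nat.eqb n a); [discriminate | reflexivity].
  - rewrite IHf1, IHf2 by lia. reflexivity.
Qed.

Lemma forallb_upd : forall G v a b, (forall f, In f G -> occ a f = 0) ->
  forallb (eval (upd v a b)) G = forallb (eval v) G.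
Proof.
  induction G; simpl; intros; auto.
  rewrite eval_upd by auto. rewrite IHG by auto. reflexivity.
Qed.

Lemma eval_head : forall f v, v (head f) = true -> eval v f = true.
Proof. induction f; simpl; intros; auto. rewrite IHf2 by auto. destruct (eval v f1); auto. Qed.

Lemma occ_head : forall f, 1 <= occ (head f) f.
Proof. induction f; simpl; [rewrite Nat.eqb_refl|]; lia. Qed.

Lemma forallb_perm : forall (p : form -> bool) G G', Permutation G G' -> forallb p G = forallb p G'.
Proof.
  intros p G G' H; induction H; simpl; auto.
  - rewrite IHPermutation; auto.
  - destruct (p x), (p y); reflexivity.
  - congruence.
Qed.

Lemma taut_perm : forall G G' F, tautological G F -> Permutation G G' -> tautological G' F.
Proof. unfold tautological; intros. rewrite <- (forallb_perm _ _ _ H0). auto. Qed.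

Lemma taut_drop : forall X G F, tautological (X::G) F ->
  (forall f, In f G -> occ (head X) f = 0) -> occ (head X) F = 0 -> tautological G F.
Proof.
  intros X G F H HG HF v. specialize (H (upd v (head X) true)). simpl in H.
  rewrite (eval_head X) in H by apply upd_eq.
  rewrite forallb_upd in H by auto. rewrite eval_upd in H by auto. exact H.
Qed.

Lemma taut_A : forall A1 E' G a, tautological (Imp A1 E' :: G) (Atom a) -> head E' = a ->
  occ a A1 = 0 -> (forall f, In f G -> occ a f = 0) -> tautological G A1.
Proof.
  intros A1 E' G a H Hh HA HG v. specialize (H (upd v a false)).
  change (implb (implb (eval (upd v a false) A1) (eval (upd v a false) E')
     && forallb (eval (upd v a false)) G) (upd v a false a) = true) in H.
  rewrite upd_eq, forallb_upd, eval_upd in H by auto.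
  destruct (eval v A1), (forallb (eval v) G); simpl in *; auto.
Qed.

Lemma taut_E : forall A1 E' G a, tautological (Imp A1 E' :: G) (Atom a) -> head E' = a ->
  occ a A1 = 0 -> (forall f, In f G -> occ a f = 0) -> tautological (E' :: G) (Atom a).
Proof.
  intros A1 E' G a H Hh HA HG. pose proof (taut_A _ _ _ _ H Hh HA HG) as HA1.
  intros v. specialize (H v); specialize (HA1 v). simpl in *.
  destruct (forallb (eval v) G), (eval v E'), (eval v A1), (v a); simpl in *;
    try discriminate; auto.
Qed.

Lemma taut_imp : forall G C D, tautological G (Imp C D) -> tautological (C::G) D.
Proof.
  intros G C D H v; specialize (H v); simpl in *.
  destruct (eval v C), (forallb (eval v) G), (eval v D); simpl in *; auto.
Qed.

Notation item := (form * nat)%type.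
Notation leaf := (list nat * form)%type.
Definition inb (s : nat) (V : list nat) := existsb (Nat.eqb s) V.
Definition vis (V : list nat) (P : list item) : list form :=
  map fst (filter (fun it => inb (snd it) V) P).
Definition occP a (P : list item) := fold_right plus 0 (map (fun it => occ a (fst it)) P).
Definition occL a (L : list leaf) := fold_right plus 0 (map (fun l => occ a (snd l)) L).
Definition impsP (P : list item) := fold_right plus 0 (map (fun it => imps (fst it)) P).
Definition impsL (L : list leaf) := fold_right plus 0 (map (fun l => imps (snd l)) L).

Lemma inb_true : forall s V, inb s V = true <-> In s V.
Proof.
  unfold inb; intros; rewrite existsb_exists; split.
  - intros [x [Hx He]]; apply Nat.eqb_eq in He; subst; auto.
  - intros; exists s; split; auto; apply Nat.eqb_refl.
Qed.

Lemma inb_false : forall s V, ~ In s V -> inb s V = false.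
Proof. intros. destruct (inb s V) eqn:E; auto. apply inb_true in E; contradiction. Qed.

Lemma vis_cons_in : forall V X s P, In s V -> vis V ((X,s)::P) = X :: vis V P.
Proof. intros; unfold vis; simpl. rewrite (proj2 (inb_true _ _) H). reflexivity. Qed.

Lemma vis_cons_notin : forall V X s P, ~ In s V -> vis V ((X,s)::P) = vis V P.
Proof. intros; unfold vis; simpl. rewrite inb_false by auto. reflexivity. Qed.

Lemma vis_perm : forall V P Q, Permutation P Q -> Permutation (vis V P) (vis V Q).
Proof.
  intros V P Q H; unfold vis; induction H; simpl; auto.
  - destruct (inb (snd x) V); simpl; auto.
  - destruct (inb (snd x) V), (inb (snd y) V); simpl; auto. apply perm_swap.
  - eapply Permutation_trans; eauto.
Qed.

Lemma vis_fresh : forall k V P, (forall it, In it P -> snd it <> k) -> vis (k::V) P = vis V P.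
Proof.
  intros; unfold vis; f_equal. apply filter_ext_in. intros it Hit.
  unfold inb; simpl. specialize (H it Hit).
  apply Nat.eqb_neq in H. rewrite H. reflexivity.
Qed.

Lemma vis_in : forall f V P, In f (vis V P) -> exists s, In (f,s) P.
Proof.
  unfold vis; intros. apply in_map_iff in H as [[X s] [Hx Hin]]. simpl in Hx; subst.
  apply filter_In in Hin as [H _]. eauto.
Qed.

Lemma occP_perm : forall a P Q, Permutation P Q -> occP a P = occP a Q.
Proof. intros a P Q H; unfold occP; induction H; simpl; lia. Qed.
Lemma impsP_perm : forall P Q, Permutation P Q -> impsP P = impsP Q.
Proof. intros P Q H; unfold impsP; induction H; simpl; lia. Qed.

Lemma occP_cons : forall a x P, occP a (x::P) = occ a (fst x) + occP a P.
Proof. reflexivity. Qed.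
Lemma occL_cons : forall a x L, occL a (x::L) = occ a (snd x) + occL a L.
Proof. reflexivity. Qed.
Lemma impsP_cons : forall x P, impsP (x::P) = imps (fst x) + impsP P.
Proof. reflexivity. Qed.
Lemma impsL_cons : forall x L, impsL (x::L) = imps (snd x) + impsL L.
Proof. reflexivity. Qed.

Lemma occP_in : forall a f s P, In (f,s) P -> occ a f <= occP a P.
Proof.
  induction P as [|it P IHP]; simpl; [tauto|]. intros [->|H]; rewrite occP_cons; simpl; [lia| specialize (IHP H); lia].
Qed.
Lemma occL_in : forall a l L, In l L -> occ a (snd l) <= occL a L.
Proof.
  induction L as [|l' L IHL]; simpl; [tauto|]. intros [->|H]; rewrite occL_cons; simpl; [lia| specialize (IHL H); lia].
Qed.

Definition labels (P : list item) (L : list leaf) := map snd P ++ concat (map fst L).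
Definition fresh P L := S (fold_right max 0 (labels P L)).

Lemma le_max_list : forall l x, In x l -> x <= fold_right max 0 l.
Proof. induction l; simpl; [tauto|]. intros x [->|H]; [lia| specialize (IHl x H); lia]. Qed.

Lemma fresh_P : forall P L it, In it P -> snd it < fresh P L.
Proof.
  intros. unfold fresh. apply le_n_S, le_max_list. unfold labels.
  apply in_app_iff; left; apply in_map; auto.
Qed.

Lemma fresh_L : forall P L l s, In l L -> In s (fst l) -> s < fresh P L.
Proof.
  intros. unfold fresh. apply le_n_S, le_max_list. unfold labels.
  apply in_app_iff; right. apply in_concat. exists (fst l); split; auto. apply in_map; auto.
Qed.

Definition LeafOK (l : leaf) (S : list item) :=
  Forall (fun it => In (snd it) (fst l)) S /\ CL7 (map fst S) (snd l).

Definition Good (P : list item) (L : list leaf) :=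
  exists Ss R, Permutation P (concat Ss ++ R) /\ Forall2 LeafOK L Ss.

Lemma concat_labels : forall L Ss it, Forall2 LeafOK L Ss -> In it (concat Ss) ->
  exists l, In l L /\ In (snd it) (fst l).
Proof.
  intros L Ss it H; induction H; simpl; [tauto|]. intros Hin.
  apply in_app_iff in Hin as [Hin|Hin].
  - destruct H as [H _]. rewrite Forall_forall in H. exists x; split; auto.
  - destruct (IHForall2 Hin) as [l0 [? ?]]. exists l0; split; auto.
Qed.

Lemma find_head : forall V P a, tautological (vis V P) (Atom a) ->
  exists X s, In (X,s) P /\ In s V /\ head X = a.
Proof.
  intros V P a H.
  destruct (existsb (fun it => inb (snd it) V && Nat.eqb (head (fst it)) a) P) eqn:Eb.
  - apply existsb_exists in Eb as [[X s] [Hin Hc]]. simpl in Hc.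
    apply andb_true_iff in Hc as [H1 H2]. apply inb_true in H1. apply Nat.eqb_eq in H2.
    eauto.
  - exfalso. specialize (H (fun n => negb (Nat.eqb n a))). simpl in H.
    rewrite Nat.eqb_refl in H.
    assert (forallb (eval (fun n => negb (n =? a))) (vis V P) = true) as Hf.
    { apply forallb_forall. intros f Hf. unfold vis in Hf.
      apply in_map_iff in Hf as [[X s] [Hx Hin]]. simpl in Hx; subst f.
      apply filter_In in Hin as [HinP Hv]. simpl in Hv. apply eval_head.
      destruct (head X =? a) eqn:Eh; auto. exfalso.
      assert (existsb (fun it => inb (snd it) V && Nat.eqb (head (fst it)) a) P = true).
      { apply existsb_exists. exists (X,s); split; auto. simpl. rewrite Hv, Eh; auto. }
      congruence. }
    rewrite Hf in H. discriminate.
Qed.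

Lemma labels_restrict : forall (S P : list item) k V,
  Forall (fun it => In (snd it) (k::V)) S -> (forall it, In it S -> In it P) ->
  (forall it, In it P -> snd it <> k) -> Forall (fun it => In (snd it) V) S.
Proof.
  intros S P k V H1 H2 H3. rewrite Forall_forall in *. intros it Hit.
  destruct (H1 it Hit) as [E|E]; auto. exfalso; exact (H3 it (H2 it Hit) (eq_sym E)).
Qed.

Lemma perm_in_l : forall (l l' : list item) it, Permutation l l' -> In it l' -> In it l.
Proof. intros. eapply Permutation_in; [apply Permutation_sym; eauto| auto]. Qed.

Lemma main_aux : forall n m P L, impsP P + impsL L = n -> impsL L + length L = m ->
  (forall x, occP x P + occL x L <= 2) ->
  Forall (fun l => tautological (vis (fst l) P) (snd l)) L -> Good P L.
Proof.
  intros n. induction n as [n IHn] using lt_wf_ind.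
  intros m. induction m as [m IHm] using lt_wf_ind.
  intros P L Hn Hm Hb Ht.
  destruct L as [|[V g] L'].
  { exists [], P. split; [apply Permutation_refl| constructor]. }
  apply Forall_cons_iff in Ht as [Htg Ht']. simpl in Htg.
  destruct g as [a | C D].
  -
    destruct (find_head _ _ _ Htg) as (X & s & HinX & HsV & Hh).
    destruct (in_split _ _ HinX) as (P1 & P2 & HP).
    assert (HPP : Permutation P ((X,s) :: (P1 ++ P2))).
    { rewrite HP. apply Permutation_sym, Permutation_middle. }
    remember (P1 ++ P2) as P0 eqn:HeqP0. clear HeqP0 HP P1 P2.
    assert (Hocc := Hb a). rewrite (occP_perm _ _ _ HPP), occP_cons, occL_cons in Hocc.
    simpl in Hocc. rewrite Nat.eqb_refl in Hocc.
    pose proof (occ_head X) as Hoh. rewrite Hh in Hoh.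
    assert (HP0 : occP a P0 = 0) by lia.
    assert (HL0 : occL a L' = 0) by lia.
    assert (HX1 : occ a X = 1) by lia.
    assert (HvisP0 : forall V' f, In f (vis V' P0) -> occ a f = 0).
    { intros V' f Hf. destruct (vis_in _ _ _ Hf) as [s' Hs']. pose proof (occP_in a _ _ _ Hs'). lia. }
    assert (HgL : forall l, In l L' -> occ a (snd l) = 0).
    { intros l Hl. pose proof (occL_in a _ _ Hl). lia. }
    assert (Hothers : Forall (fun l => tautological (vis (fst l) P0) (snd l)) L').
    { rewrite Forall_forall in *. intros l Hl. specialize (Ht' l Hl).
      eapply taut_perm in Ht'; [| apply vis_perm; exact HPP].
      destruct (in_dec Nat.eq_dec s (fst l)) as [Hin|Hnin].
      - rewrite vis_cons_in in Ht' by auto. eapply taut_drop; [exact Ht' | | ];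
          rewrite Hh; eauto.
      - rewrite vis_cons_notin in Ht' by auto. exact Ht'. }
    destruct X as [a' | A1 E'].
    +
      simpl in Hh; subst a'.
      assert (HG : Good P0 L').
      { apply (IHm (impsL L' + length L')); [ | | reflexivity | | exact Hothers].
        - subst m. rewrite impsL_cons. simpl. lia.
        - rewrite (impsP_perm _ _ HPP), impsP_cons, impsL_cons in Hn. simpl in Hn. exact Hn.
        - intros x. specialize (Hb x).
          rewrite (occP_perm _ _ _ HPP), occP_cons, occL_cons in Hb. lia. }
      destruct HG as (Ss & R & HPR & HF).
      exists ([(Atom a, s)] :: Ss), R. split.
      * eapply Permutation_trans; [exact HPP|]. simpl. apply perm_skip. exact HPR.
      * constructor; auto. split.
        -- constructor; auto.
        -- simpl. apply (CL7_ax []). apply Permutation_refl.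
    +
      simpl in Hh.
      assert (HA1 : occ a A1 = 0).
      { simpl in HX1. pose proof (occ_head E') as HE. rewrite Hh in HE. lia. }
      set (k := fresh P ((V, Atom a) :: L')).
      assert (HkP0 : forall it, In it P0 -> snd it <> k).
      { intros it Hit. assert (In it P) as HiP by (eapply perm_in_l; [exact HPP| right; exact Hit]).
        pose proof (fresh_P P ((V,Atom a)::L') it HiP). unfold k; lia. }
      assert (HkV : ~ In k V).
      { intro HkV. pose proof (fresh_L P ((V,Atom a)::L') (V, Atom a) k (or_introl eq_refl) HkV).
        unfold k in *; lia. }
      assert (HkL : forall l, In l L' -> ~ In k (fst l)).
      { intros l Hl HkV'. pose proof (fresh_L P ((V,Atom a)::L') l k (or_intror Hl) HkV').
        unfold k in *; lia. }
      clearbody k.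
      assert (Htg' : tautological (Imp A1 E' :: vis V P0) (Atom a)).
      { eapply taut_perm; [exact Htg|]. eapply Permutation_trans; [apply vis_perm; exact HPP|].
        rewrite vis_cons_in by auto. apply Permutation_refl. }
      assert (HG : Good ((E',k) :: P0) ((V, A1) :: (k::V, Atom a) :: L')).
      { apply (IHn (impsP ((E',k) :: P0) + impsL ((V, A1) :: (k::V, Atom a) :: L')))
          with (m := impsL ((V, A1) :: (k::V, Atom a) :: L') + length ((V, A1) :: (k::V, Atom a) :: L'));
          [ | reflexivity | reflexivity | | ].
        - rewrite (impsP_perm _ _ HPP) in Hn. subst n.
          rewrite !impsP_cons, !impsL_cons. simpl. lia.
        - intros x. specialize (Hb x).
          rewrite (occP_perm _ _ _ HPP), occP_cons, occL_cons in Hb.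
          rewrite occP_cons, !occL_cons. simpl in *. lia.
        - constructor; [|constructor].
          + simpl. rewrite vis_cons_notin by auto. eapply taut_A; eauto.
          + simpl. rewrite vis_cons_in by (left; reflexivity). rewrite vis_fresh by auto.
            eapply taut_E; eauto.
          + rewrite Forall_forall in *. intros l Hl.
            rewrite vis_cons_notin by (apply HkL; auto). apply Hothers; auto. }
      destruct HG as (Ss & R & HPR & HF).
      inversion HF as [|l1 S1 Ls Ss1 [HS1l HS1d] HF1]; subst.
      inversion HF1 as [|l2 S2 Ls2 Ss2 [HS2l HS2d] HF2]; subst.
      simpl in HPR. rewrite <- !app_assoc in HPR.
      simpl in HS1l, HS1d, HS2l, HS2d.
      assert (HinE : In (E',k) (S1 ++ S2 ++ concat Ss2 ++ R)).
      { eapply Permutation_in; [exact HPR| left; reflexivity]. }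
      apply in_app_iff in HinE as [HinE|HinE].
      { exfalso. rewrite Forall_forall in HS1l. apply HkV. exact (HS1l _ HinE). }
      apply in_app_iff in HinE as [HinE|HinE].
      * (* E' consumed by leaf a *)
        destruct (in_split _ _ HinE) as (S2a & S2b & ->).
        assert (HP0' : Permutation P0 ((S1 ++ S2a) ++ S2b ++ concat Ss2 ++ R)).
        { apply (@Permutation_cons_app_inv _ _ _ _ (E',k)).
          eapply Permutation_trans; [exact HPR|]. rewrite <- ?app_assoc. simpl. rewrite <- ?app_assoc. apply Permutation_refl. }
        assert (HS2' : Forall (fun it => In (snd it) V) (S2a ++ S2b)).
        { apply labels_restrict with (P := P0) (k := k); auto.
          - rewrite Forall_forall in *. intros it Hit. apply HS2l.
            apply in_app_iff in Hit as [?|?]; apply in_app_iff; [left|right; right]; auto.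
          - intros it Hit. eapply perm_in_l; [exact HP0'|].
            apply in_app_iff in Hit as [?|?]; apply in_app_iff; [left; apply in_app_iff; right
              | right; apply in_app_iff; left]; auto. }
        exists (((Imp A1 E', s) :: (S2a ++ S2b) ++ S1) :: Ss2), R. split.
        -- eapply Permutation_trans; [exact HPP|]. simpl. apply perm_skip.
           eapply Permutation_trans; [exact HP0'|].
           rewrite <- !app_assoc.
           rewrite (app_assoc S2a S2b (concat Ss2 ++ R)), (app_assoc S2a S2b (S1 ++ concat Ss2 ++ R)).
           apply Permutation_app_swap_app.
        -- constructor; auto. split.
           ++ constructor; [exact HsV|]. apply Forall_app; split; auto.
           ++ simpl. rewrite map_app.
              apply CL7_L with (G := map fst (S2a ++ S2b)) (D := map fst S1) (E := A1) (F := E');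
                auto.
              apply CL7_perm with (1 := HS2d). rewrite !map_app. simpl.
              apply Permutation_sym, Permutation_middle.
      * apply in_app_iff in HinE as [HinE|HinE].
        { exfalso. destruct (concat_labels _ _ _ HF2 HinE) as [l [Hl Hkl]].
          exact (HkL l Hl Hkl). }
        destruct (in_split _ _ HinE) as (Ra & Rb & ->).
        assert (HP0' : Permutation P0 ((S1 ++ S2 ++ concat Ss2 ++ Ra) ++ Rb)).
        { apply (@Permutation_cons_app_inv _ _ _ _ (E',k)).
          eapply Permutation_trans; [exact HPR|]. rewrite <- ?app_assoc. simpl. rewrite <- ?app_assoc. apply Permutation_refl. }
        assert (HS2' : Forall (fun it => In (snd it) V) S2).
        { apply labels_restrict with (P := P0) (k := k); auto.
          intros it Hit. eapply perm_in_l; [exact HP0'|].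
          rewrite <- !app_assoc. apply in_app_iff; right; apply in_app_iff; left; auto. }
        exists (S2 :: Ss2), ((Imp A1 E', s) :: S1 ++ Ra ++ Rb). split.
        -- eapply Permutation_trans; [exact HPP|]. simpl.
           rewrite app_assoc.
           apply Permutation_cons_app.
           eapply Permutation_trans; [exact HP0'|].
           rewrite <- !app_assoc.
           rewrite (app_assoc S2 (concat Ss2) (Ra ++ Rb)), (app_assoc S2 (concat Ss2) (S1 ++ Ra ++ Rb)).
           apply Permutation_app_swap_app.
        -- constructor; auto. split; auto.
  -
    set (k := fresh P ((V, Imp C D) :: L')).
    assert (HkP : forall it, In it P -> snd it <> k).
    { intros it Hit. pose proof (fresh_P P ((V,Imp C D)::L') it Hit). unfold k; lia. }
    assert (HkV : ~ In k V).
    { intro HkV. pose proof (fresh_L P ((V,Imp C D)::L') (V, Imp C D) k (or_introl eq_refl) HkV).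
      unfold k in *; lia. }
    assert (HkL : forall l, In l L' -> ~ In k (fst l)).
    { intros l Hl HkV'. pose proof (fresh_L P ((V,Imp C D)::L') l k (or_intror Hl) HkV').
      unfold k in *; lia. }
    clearbody k.
    assert (HG : Good ((C,k) :: P) ((k::V, D) :: L')).
    { apply (IHn (impsP ((C,k) :: P) + impsL ((k::V, D) :: L')))
        with (m := impsL ((k::V, D) :: L') + length ((k::V, D) :: L'));
        [ | reflexivity | reflexivity | | ].
      - subst n. rewrite !impsP_cons, !impsL_cons. simpl. lia.
      - intros x. specialize (Hb x). rewrite !occP_cons, !occL_cons in *. simpl in *. lia.
      - constructor.
        + simpl. rewrite vis_cons_in by (left; reflexivity). rewrite vis_fresh by auto.
          apply taut_imp; auto.
        + rewrite Forall_forall in *. intros l Hl.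
          rewrite vis_cons_notin by (apply HkL; auto). apply Ht'; auto. }
    destruct HG as (Ss & R & HPR & HF).
    inversion HF as [|l1 S0 Ls Ss1 [HS0l HS0d] HF1]; subst.
    simpl in HPR. rewrite <- !app_assoc in HPR. simpl in HS0l, HS0d.
    assert (HinC : In (C,k) (S0 ++ concat Ss1 ++ R)).
    { eapply Permutation_in; [exact HPR| left; reflexivity]. }
    apply in_app_iff in HinC as [HinC|HinC].
    + destruct (in_split _ _ HinC) as (S0a & S0b & ->).
      assert (HP' : Permutation P (S0a ++ S0b ++ concat Ss1 ++ R)).
      { apply (@Permutation_cons_app_inv _ _ _ _ (C,k)).
          eapply Permutation_trans; [exact HPR|]. rewrite <- ?app_assoc. simpl. rewrite <- ?app_assoc. apply Permutation_refl. }
      exists ((S0a ++ S0b) :: Ss1), R. split.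
      * simpl. rewrite <- !app_assoc. exact HP'.
      * constructor; auto. split.
        -- apply labels_restrict with (P := P) (k := k); auto.
           ++ rewrite Forall_forall in *. intros it Hit. apply HS0l.
              apply in_app_iff in Hit as [?|?]; apply in_app_iff; [left|right; right]; auto.
           ++ intros it Hit. eapply perm_in_l; [exact HP'|]. rewrite app_assoc.
              apply in_app_iff; left; auto.
        -- simpl. apply CL7_R. apply CL7_perm with (1 := HS0d). rewrite !map_app. simpl.
           apply Permutation_sym, Permutation_middle.
    + apply in_app_iff in HinC as [HinC|HinC].
      { exfalso. destruct (concat_labels _ _ _ HF1 HinC) as [l [Hl Hkl]].
        exact (HkL l Hl Hkl). }
      destruct (in_split _ _ HinC) as (Ra & Rb & ->).
      assert (HP' : Permutation P ((S0 ++ concat Ss1 ++ Ra) ++ Rb)).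
      { apply (@Permutation_cons_app_inv _ _ _ _ (C,k)).
          eapply Permutation_trans; [exact HPR|]. rewrite <- ?app_assoc. simpl. rewrite <- ?app_assoc. apply Permutation_refl. }
      exists (S0 :: Ss1), (Ra ++ Rb). split.
      * simpl. rewrite <- !app_assoc. rewrite <- !app_assoc in HP'. exact HP'.
      * constructor; auto. split.
        -- apply labels_restrict with (P := P) (k := k); auto.
           intros it Hit. eapply perm_in_l; [exact HP'|].
           rewrite <- !app_assoc. apply in_app_iff; left; auto.
        -- simpl. apply CL7_R. apply CL7_weak. exact HS0d.
Qed.

Lemma occP_map0 : forall x G, occP x (map (fun f => (f,0)) G) = fold_right plus 0 (map (occ x) G).
Proof. induction G; simpl; auto. rewrite occP_cons. simpl. rewrite IHG. reflexivity. Qed.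

Lemma vis_map0 : forall G, vis [0] (map (fun f => (f,0)) G) = G.
Proof. unfold vis; induction G; simpl; auto. f_equal. exact IHG. Qed.

Theorem lemma4p3 (G : list form) (F : form) :
  binary G F -> tautological G F -> CL7 G F.
Proof.
  intros Hbin Htau.
  assert (HG : Good (map (fun f => (f,0)) G) [([0], F)]).
  { eapply main_aux; [reflexivity | reflexivity | | ].
    - intros x. rewrite occL_cons, occP_map0. simpl. specialize (Hbin x). unfold occL. simpl. lia.
    - constructor; [|constructor]. simpl. rewrite vis_map0. exact Htau. }
  destruct HG as (Ss & R & HPR & HF).
  inversion HF as [|l S0 Ls Ss' [_ HS0] HF']; subst.
  inversion HF'; subst. simpl in HPR. rewrite app_nil_r in HPR. simpl in HS0.
  apply CL7_perm with (map fst R ++ map fst S0).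
  - apply CL7_weak_app. exact HS0.
  - apply Permutation_map with (f := fst) in HPR. rewrite map_map in HPR. simpl in HPR.
    rewrite map_id in HPR. rewrite map_app in HPR.
    eapply Permutation_trans; [apply Permutation_app_comm| apply Permutation_sym; exact HPR].
Qed.
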